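(* Let $S$ be a finite set of at least two points in $\mathbb R^2$, let $\square$ be a minimal bounding square of $S$, and let $\mathrm{lfs}(x,y)$ denote the Euclidean distance from $(x,y)$ to the second nearest point of $S$. Then for the quadtree clustering of $S$ described below, the sum over its clusters of the perimeters of their convex hulls is at most $c\int_{\square} \frac{1}{\mathrm{lfs}(x,y)}\,dx\,dy$, for an absolute constant $c$.
   Context: Quadtree: starting from the root square $\square$, repeatedly split any square containing more than one point of $S$ into four equal quadrants; a point on the boundary of a square is considered outside it if it lies on the lower or right side and inside otherwise, so each square is the disjoint union of its quadrants. The compressed quadtree consists of those quadtree squares that contain points of $S$ in more than one of their quadrants (plus the root); each non-root square's parent is the smallest larger compressed-quadtree square containing it, and each point's parent is the smallest square containing it, giving a tree in which each square has between two and four children, at most one per quadrant. The quadtree clustering has a cluster for the set of points in each compressed-quadtree square; additionally, for a square with three children, a cluster combining the points of two of its children whose quadrants share a side, and for a square with four children, two clusters each combining the points of a pair of children in side-adjacent quadrants. Together with singletons this is a hierarchical clustering. *)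

(* Defs.v *)
From HB Require Import structures.
From mathcomp Require Import all_boot all_order all_algebra.
From mathcomp Require Import all_classical all_reals all_analysis.
Set Implicit Arguments. Unset Strict Implicit. Unset Printing Implicit Defensive.
Import Order.TTheory GRing.Theory Num.Theory.
Local Open Scope ring_scope.

Section QuadtreeDefs.
Variable R : realType.
Implicit Types (z w u : R * R).

Definition dist z w : R := Num.sqrt ((z.1 - w.1) ^+ 2 + (z.2 - w.2) ^+ 2).
Definition dotp z w : R := z.1 * w.1 + z.2 * w.2.
(* cross product of (b - a) and (c - a): >= 0 iff c is weakly left of a->b *)
Definition orient (a b c : R * R) : R :=
  (b.1 - a.1) * (c.2 - a.2) - (b.2 - a.2) * (c.1 - a.1).

Definition is_hull_vertex (P : seq (R * R)) v : Prop :=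
  v \in P /\ exists u, forall w, w \in P -> w != v -> dotp u w < dotp u v.

(* s lists the hull vertices of P in counterclockwise cyclic order *)
Definition hull_cycle (P : seq (R * R)) (s : seq (R * R)) : Prop :=
  [/\ uniq s, (forall v, v \in s <-> is_hull_vertex P v) &
      forall e, e \in zip s (rot 1 s) -> forall w, w \in P -> 0 <= orient e.1 e.2 w].

Definition cycle_length (s : seq (R * R)) : R :=
  \sum_(e <- zip s (rot 1 s)) dist e.1 e.2.

(* perimeter of the convex hull of P (length of the hull boundary polygon;
   for collinear sets this is twice the segment length, for a point 0) *)
Definition hull_perimeter (P : seq (R * R)) : R :=
  sup [set l | exists s, hull_cycle P s /\ l = cycle_length s].

Variable n : nat.
Variable p : 'I_n -> R * R.

Definition lfs z : R := nth 0 (sort <=%O [seq dist z (p a) | a <- enum 'I_n]) 1.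

Definition bounding_square (x0 y0 L : R) : Prop :=
  forall a, x0 <= (p a).1 <= x0 + L /\ y0 <= (p a).2 <= y0 + L.

Definition min_bounding_square (x0 y0 L : R) : Prop :=
  bounding_square x0 y0 L /\
  forall x1 y1 L', bounding_square x1 y1 L' -> L <= L'.

Variables (x0 y0 L : R).

(* Quadtree cells at depth k are indexed by (i, j), 0 <= i, j < 2^k; cell
   (i,j) is [x0 + i L/2^k, x0 + (i+1) L/2^k) x (y0 + j L/2^k, y0 + (j+1) L/2^k]
   (lower and right sides excluded), except that sides lying on the root's
   boundary are included (so the root contains all of S). *)
Definition cellx (k : nat) (x : R) : int :=
  Order.min (Num.floor ((x - x0) / L * 2 ^+ k)) (2 ^ k - 1)%:Z.
Definition celly (k : nat) (y : R) : int :=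
  Order.max (Num.ceil ((y - y0) / L * 2 ^+ k) - 1) 0.

Definition cell_pts (k : nat) (i j : int) : {set 'I_n} :=
  [set a | (cellx k (p a).1 == i) && (celly k (p a).2 == j)].

(* points of S in quadrant q = (right?, top?) of cell (k, i, j) *)
Definition quad_pts (k : nat) (i j : int) (q : bool * bool) : {set 'I_n} :=
  cell_pts k.+1 (i * 2 + (q.1 : nat)%:Z) (j * 2 + (q.2 : nat)%:Z).

(* number of quadrants of the cell containing points of S
   (= number of children in the compressed quadtree) *)
Definition nquad (k : nat) (i j : int) : nat :=
  #|[set q : bool * bool | (0 < #|quad_pts k i j q|)%N]|.

Definition compressed_square (k : nat) (i j : int) : Prop :=
  (k = 0%N /\ i = 0 /\ j = 0) \/ (1 < nquad k i j)%N.

(* A choice [d] of the extra pair clusters: for a square with three or four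
   children, d k i j = true pairs the side-adjacent quadrants lying in the same
   row, false pairs those in the same column.  With three children this selects
   exactly one of the two possible side-adjacent pairs, with four children it
   selects two complementary pairs. *)
Definition is_cluster (d : nat -> int -> int -> bool) (A : {set 'I_n}) : Prop :=
  (exists k i j, compressed_square k i j /\ A = cell_pts k i j) \/
  (exists k i j, compressed_square k i j /\ (3 <= nquad k i j)%N /\
     exists q1 q2 : bool * bool,
       [/\ (if d k i j then q1.2 = q2.2 /\ q1.1 <> q2.1
                      else q1.1 = q2.1 /\ q1.2 <> q2.2),
           (0 < #|quad_pts k i j q1|)%N, (0 < #|quad_pts k i j q2|)%N &
           A = quad_pts k i j q1 :|: quad_pts k i j q2]).

End QuadtreeDefs.

Definition closed_square (R : realType) (x0 y0 L : R) : set (R * R) :=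
  [set z | x0 <= z.1 <= x0 + L /\ y0 <= z.2 <= y0 + L].

(* Main.v *)
Require Import Defs.
From HB Require Import structures.
From mathcomp Require Import all_boot all_order all_algebra.
From mathcomp Require Import all_classical all_reals all_analysis.
From mathcomp Require Import zify ring lra.
Import Order.TTheory GRing.Theory Num.Theory.
Local Open Scope ring_scope.
Set Implicit Arguments. Unset Strict Implicit. Unset Printing Implicit Defensive.

Section Sort2.
Variable R : realType.

Lemma count_sort (s : seq R) (a : pred R) : count a (sort <=%O s) = count a s.
Proof. by apply/permP; rewrite perm_sort. Qed.

Lemma sort2_le (s : seq R) (v : R) :
  (1 < count (fun x : R => (x <= v)%R) s)%N -> nth 0 (sort <=%O s) 1 <= v.
Proof.
rewrite -count_sort; have := sort_le_sorted s.
case: (sort <=%O s) => [|x0 [|x1 r]] //=; first by case: (x0 <= v).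
case/andP=> h01 hp hc; rewrite leNgt; apply/negP => vx1; move: hc.
have hall := order_path_min (@le_trans _ R) hp.
have -> : count (fun x : R => (x <= v)%R) r = 0%N.
  apply/eqP; rewrite -leqn0 leqNgt -has_count; apply/hasPn => y yr.
  by move/allP: hall => /(_ y yr) x1y; rewrite -ltNge (lt_le_trans vx1 x1y).
have -> : (x1 <= v) = false by rewrite leNgt vx1.
by case: (x0 <= v).
Qed.

Lemma sort2_gt (s : seq R) (v : R) : (1 < size s)%N ->
  (count (fun x : R => (x <= v)%R) s <= 1)%N -> v < nth 0 (sort <=%O s) 1.
Proof.
rewrite -count_sort -(size_sort <=%O); have := sort_le_sorted s.
case: (sort <=%O s) => [|x0 [|x1 r]] //= /andP[h01 _] _.
rewrite ltNge; apply: contraTN => x1v.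
by rewrite x1v (le_trans h01 x1v).
Qed.
End Sort2.

Lemma count_enum_ord n (P : pred 'I_n) : count P (enum 'I_n) = #|P|.
Proof. by rewrite cardE /enum_mem size_filter count_filter; apply: eq_count => x; rewrite /= andbT. Qed.

Section LFS.
Variable R : realType.
Implicit Types z w : R * R.

Lemma dist_ge0 z w : 0 <= dist z w.
Proof. exact: sqrtr_ge0. Qed.

Lemma dist_le_abs z w : dist z w <= `|z.1 - w.1| + `|z.2 - w.2|.
Proof.
rewrite /dist -(ger0_norm (addr_ge0 (normr_ge0 (z.1 - w.1)) (normr_ge0 (z.2 - w.2)))).
rewrite -sqrtr_sqr ler_wsqrtr //.
set a := z.1 - w.1; set b := z.2 - w.2.
have ha := real_normK (num_real a); have hb := real_normK (num_real b).
have a0 := normr_ge0 a; have b0 := normr_ge0 b.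
rewrite [leRHS]sqrrD ha hb. have : 0 <= `|a| * `|b| by apply: mulr_ge0.
lra.
Qed.

Lemma dist_eq0 z w : dist z w <= 0 -> z = w.
Proof.
move=> h; have : dist z w == 0 by rewrite eq_le h dist_ge0.
rewrite sqrtr_eq0 => h2.
have h3 : (z.1 - w.1) ^+ 2 + (z.2 - w.2) ^+ 2 == 0.
  by rewrite eq_le h2 addr_ge0 // sqr_ge0.
move: h3; rewrite paddr_eq0 ?sqr_ge0 // !sqrf_eq0 !subr_eq0 => /andP[/eqP e1 /eqP e2].
by case: z w e1 e2 {h h2} => [? ?] [? ?] /= -> ->.
Qed.

Variable n : nat.
Variable p : 'I_n -> R * R.

Lemma lfs_le z a b (v : R) : a != b -> dist z (p a) <= v -> dist z (p b) <= v ->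
  lfs p z <= v.
Proof.
move=> ab ha hb; apply: sort2_le; rewrite count_map count_enum_ord.
by apply/card_gt1P; exists a, b; rewrite !inE /= ha hb.
Qed.

Lemma lfs_gt0 z : injective p -> (1 < n)%N -> 0 < lfs p z.
Proof.
move=> inj n2; apply: sort2_gt; first by rewrite size_map size_enum_ord.
rewrite count_map count_enum_ord; apply/card_le1_eqP => a b.
rewrite !inE /= => /dist_eq0 ha /dist_eq0 hb; apply: inj; by rewrite -ha -hb.
Qed.
End LFS.

Section Hull.
Variable R : realType.
Implicit Types (a b c d u v w z : R * R) (P s : seq (R * R)).

Definition exposed P v := exists u, forall w, w \in P -> w != v -> dotp u w < dotp u v.

Lemma pair_eq2 z w : z.1 = w.1 -> z.2 = w.2 -> z = w.
Proof. by case: z w => [? ?] [? ?] /= -> ->. Qed.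

Lemma not_exposed P a b v : a \in P -> b \in P -> a.1 < v.1 -> v.1 < b.1 ->
  orient a b v = 0 -> ~ exposed P v.
Proof.
move=> Pa Pb av vb o0 [u hu].
have hav : a != v by apply/eqP => e; move: av; rewrite e ltxx.
have hbv : b != v by apply/eqP => e; move: vb; rewrite e ltxx.
have ha := hu a Pa hav; have hb := hu b Pb hbv.
set D := b.1 - a.1; set al := v.1 - a.1.
have key : D * dotp u v = (D - al) * dotp u a + al * dotp u b + u.2 * orient a b v.
  by rewrite /D /al /dotp /orient; ring.
rewrite o0 mulr0 addr0 in key.
have h1 : (D - al) * dotp u a < (D - al) * dotp u v.
  by rewrite ltr_pM2l // /D /al; lra.
have h2 : al * dotp u b < al * dotp u v.
  by rewrite ltr_pM2l // /al; lra.
have h3 : D * dotp u v = (D - al) * dotp u v + al * dotp u v by ring.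
lra.
Qed.

Lemma disjoint_aux P a b c d :
  a \in P -> b \in P -> c \in P -> d \in P ->
  exposed P a -> exposed P b -> exposed P c -> exposed P d ->
  (forall w, w \in P -> 0 <= orient a b w) ->
  (forall w, w \in P -> 0 <= orient c d w) ->
  a.1 < b.1 -> c.1 < d.1 -> (a, b) != (c, d) -> a.1 <= c.1 -> b.1 <= c.1.
Proof.
move=> Pa Pb Pc Pd ea eb ec ed oab ocd ab cd neq ac.
rewrite leNgt; apply/negP => cb.
have key : (b.1 - c.1) * orient c d a + (c.1 - a.1) * orient c d b
           = - ((d.1 - c.1) * orient a b c) by rewrite /orient; ring.
have o1 : 0 <= (b.1 - c.1) * orient c d a by apply: mulr_ge0; [lra | exact: ocd].
have o2 : 0 <= (c.1 - a.1) * orient c d b by apply: mulr_ge0; [lra | exact: ocd].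
have o3 : (d.1 - c.1) * orient a b c <= 0 by lra.
have o4 : orient a b c <= 0.
  by move: o3; rewrite pmulr_rle0 //; lra.
have oabc : orient a b c = 0 by apply/eqP; rewrite eq_le o4 oab.
have [ac'|ac'] := ltrP a.1 c.1.
  by apply: (not_exposed Pa Pb ac' cb oabc).
have e1 : c.1 = a.1 by apply/eqP; rewrite eq_le ac'.
have e2 : c.2 = a.2.
  move: oabc; rewrite /orient e1 subrr mulr0 subr0 => /eqP.
  rewrite mulf_eq0 !subr_eq0 => /orP[/eqP ba|/eqP //]; lra.
have ca : c = a by apply: pair_eq2.
subst c.
have oabd : orient a b d = 0.
  have h1 := oab d Pd; have h2 := ocd b Pb.
  have : orient a d b = - orient a b d by rewrite /orient; ring.
  lra.
have [db|bd] := ltrP d.1 b.1.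
  by apply: (not_exposed Pa Pb cd db oabd).
move: bd; rewrite le_eqVlt => /orP[/eqP bd|bd].
  have e3 : d.2 = b.2.
    have h : orient a b d = (b.1 - a.1) * (d.2 - b.2) by rewrite /orient bd; ring.
    move: oabd; rewrite h => /eqP.
    rewrite mulf_eq0 !subr_eq0 => /orP[/eqP ba|/eqP //]; lra.
  by move: neq; rewrite (pair_eq2 bd (esym e3)) eqxx.
have oadb : orient a d b = 0.
  have : orient a d b = - orient a b d by rewrite /orient; ring.
  lra.
by apply: (not_exposed Pa Pd ab bd oadb).
Qed.


Lemma disjoint_edges P a b c d :
  a \in P -> b \in P -> c \in P -> d \in P ->
  exposed P a -> exposed P b -> exposed P c -> exposed P d ->
  (forall w, w \in P -> 0 <= orient a b w) ->
  (forall w, w \in P -> 0 <= orient c d w) ->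
  a.1 < b.1 -> c.1 < d.1 -> (a, b) != (c, d) -> b.1 <= c.1 \/ d.1 <= a.1.
Proof.
move=> Pa Pb Pc Pd ea eb ec ed oab ocd ab cd neq.
have [ac|ca] := lerP a.1 c.1.
  by left; apply: (disjoint_aux Pa Pb Pc Pd).
right; apply: (disjoint_aux Pc Pd Pa Pb) => //; last exact: ltW.
by rewrite eq_sym.
Qed.

Lemma pack (T : eqType) (lo hi : T -> R) (E : seq T) (X Y : R) :
  uniq E -> X <= Y ->
  (forall e, e \in E -> [/\ X <= lo e, lo e <= hi e & hi e <= Y]) ->
  (forall e f, e \in E -> f \in E -> e != f -> hi e <= lo f \/ hi f <= lo e) ->
  \sum_(e <- E) (hi e - lo e) <= Y - X.
Proof.
move: X Y; have [N] := ubnP (size E); elim: N E => // N IH [|e E'] /= szN X Y.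
  by move=> _ XY _ _; rewrite big_nil subr_ge0.
case/andP=> eE' uq XY hb hd.
rewrite big_cons (bigID (fun f => hi f <= lo e)) /=.
have [Xe ele eY] := hb e (mem_head _ _).
have inE' : forall f, f \in E' -> f \in e :: E' by move=> f fE; rewrite in_cons fE orbT.
have S1 : \sum_(f <- E' | hi f <= lo e) (hi f - lo f) <= lo e - X.
  rewrite -big_filter; apply: IH => //.
  - by rewrite size_filter (leq_ltn_trans (count_size _ _)).
  - exact: filter_uniq.
  - move=> f; rewrite mem_filter => /andP[fe fE].
    by have [? ? ?] := hb f (inE' _ fE).
  - move=> f g; rewrite !mem_filter => /andP[_ fE] /andP[_ gE].
    exact: hd (inE' _ fE) (inE' _ gE).
have S2 : \sum_(f <- E' | ~~ (hi f <= lo e)) (hi f - lo f) <= Y - hi e.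
  rewrite -big_filter; apply: IH => //.
  - by rewrite size_filter (leq_ltn_trans (count_size _ _)).
  - exact: filter_uniq.
  - move=> f; rewrite mem_filter => /andP[fe fE].
    have [? ? ?] := hb f (inE' _ fE); split => //.
    have ef : e != f by apply: contraNneq eE' => ->.
    by case: (hd e f (mem_head _ _) (inE' _ fE) ef) => // h; rewrite h in fe.
  - move=> f g; rewrite !mem_filter => /andP[_ fE] /andP[_ gE].
    exact: hd (inE' _ fE) (inE' _ gE).
lra.
Qed.

Lemma zip_map2 (T1 T2 : Type) (f : T1 -> T2) (s t : seq T1) :
  zip (map f s) (map f t) = map (fun e => (f e.1, f e.2)) (zip s t).
Proof. by elim: s t => [|x s IH] [|y t] //=; rewrite IH. Qed.

Lemma mem_zip_rot s e : e \in zip s (rot 1 s) -> e.1 \in s /\ e.2 \in s.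
Proof.
move=> he; split.
  have : e.1 \in unzip1 (zip s (rot 1 s)) by apply: map_f.
  by rewrite unzip1_zip // size_rot.
have : e.2 \in unzip2 (zip s (rot 1 s)) by apply: map_f.
by rewrite unzip2_zip ?size_rot // mem_rot.
Qed.

Lemma uniq_zip_rot s : uniq s -> uniq (zip s (rot 1 s)).
Proof.
by move=> us; apply: (@map_uniq _ _ fst); rewrite -/(unzip1 _) unzip1_zip // size_rot.
Qed.

Lemma tele_zip_rot (f : R * R -> R) s :
  \sum_(e <- zip s (rot 1 s)) (f e.2 - f e.1) = 0.
Proof.
rewrite sumrB.
have -> : \sum_(e <- zip s (rot 1 s)) f e.2 = \sum_(x <- s) f x.
  rewrite -(big_map snd xpredT) -/(unzip2 _) unzip2_zip ?size_rot //.
  by apply: perm_big; rewrite perm_rot.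
have -> : \sum_(e <- zip s (rot 1 s)) f e.1 = \sum_(x <- s) f x.
  by rewrite -(big_map fst xpredT) -/(unzip1 _) unzip1_zip ?size_rot.
by rewrite subrr.
Qed.

Lemma sum_absdx P s (X sg : R) : uniq s -> 0 <= sg ->
  (forall v, v \in s -> v \in P /\ exposed P v) ->
  (forall e, e \in zip s (rot 1 s) -> forall w, w \in P -> 0 <= orient e.1 e.2 w) ->
  (forall w, w \in P -> X <= w.1 <= X + sg) ->
  \sum_(e <- zip s (rot 1 s)) `|e.2.1 - e.1.1| <= 2 * sg.
Proof.
move=> us sg0 hv ho hbox.
set E := zip s (rot 1 s).
have habs : forall x : R, `|x| = 2 * (if 0 < x then x else 0) - x.
  move=> x; case: ltrP => hx; first by rewrite gtr0_norm //; ring.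
  by rewrite ler0_norm //; ring.
under eq_bigr do rewrite habs.
rewrite sumrB (tele_zip_rot (fun z => z.1)) subr0 -mulr_sumr ler_pM2l //.
rewrite -big_mkcond /= -big_filter.
have -> : sg = (X + sg) - X by ring.
apply: pack.
- by apply: filter_uniq; apply: uniq_zip_rot.
- lra.
- move=> e; rewrite mem_filter => /andP[he eE].
  have [e1s e2s] := mem_zip_rot eE.
  have /andP[? ?] := hbox _ (hv _ e1s).1; have /andP[? ?] := hbox _ (hv _ e2s).1.
  split => //; lra.
- move=> e f; rewrite !mem_filter => /andP[he eE] /andP[hf fE] ef.
  have [e1s e2s] := mem_zip_rot eE; have [f1s f2s] := mem_zip_rot fE.
  apply: (disjoint_edges (hv _ e1s).1 (hv _ e2s).1 (hv _ f1s).1 (hv _ f2s).1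
    (hv _ e1s).2 (hv _ e2s).2 (hv _ f1s).2 (hv _ f2s).2 (ho _ eE) (ho _ fE)).
  + by rewrite -subr_gt0.
  + by rewrite -subr_gt0.
  + by case: e f ef {he hf eE fE e1s e2s f1s f2s} => [? ?] [? ?].
Qed.


Definition rho (z : R * R) : R * R := (- z.2, z.1).
Lemma orient_rho a b c : orient (rho a) (rho b) (rho c) = orient a b c.
Proof. by rewrite /orient /rho /=; ring. Qed.
Lemma dotp_rho u w : dotp (rho u) (rho w) = dotp u w.
Proof. by rewrite /dotp /rho /=; ring. Qed.
Lemma rho_inj : injective rho.
Proof. by move=> [x y] [x' y'] [/eqP]; rewrite eqr_opp => /eqP -> ->. Qed.

Lemma cycle_le P s (X Y sg : R) : 0 <= sg -> hull_cycle P s ->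
  (forall w, w \in P -> X <= w.1 <= X + sg /\ Y <= w.2 <= Y + sg) ->
  cycle_length s <= 4 * sg.
Proof.
move=> sg0 [us hv ho] hbox.
have hv' : forall v, v \in s -> v \in P /\ exposed P v.
  by move=> v /hv [].
have Sx := sum_absdx us sg0 hv' ho (fun w Pw => (hbox w Pw).1).
have Sy : \sum_(e <- zip s (rot 1 s)) `|e.2.2 - e.1.2| <= 2 * sg.
  have hn : forall x y : R, `|- x - - y| = `|x - y|.
    by move=> x y; rewrite -opprD normrN.
  have U : uniq (map rho s) by rewrite (map_inj_uniq rho_inj).
  have V : forall v, v \in map rho s -> v \in map rho P /\ exposed (map rho P) v.
    move=> v' /mapP[v vs ->]; have [Pv [u hu]] := hv' v vs.
    split; first exact: map_f.
    exists (rho u) => w' /mapP[w Pw ->] wv; rewrite !dotp_rho; apply: hu => //.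
    by apply: contraNneq wv => ->.
  have O : forall e, e \in zip (map rho s) (rot 1 (map rho s)) ->
      forall w, w \in map rho P -> 0 <= orient e.1 e.2 w.
    rewrite -map_rot zip_map2.
    move=> e' /mapP[e eE ->] w' /mapP[w Pw ->] /=; rewrite orient_rho.
    exact: ho.
  have B : forall w, w \in map rho P -> - (Y + sg) <= w.1 <= - (Y + sg) + sg.
    move=> w' /mapP[w Pw ->] /=; have [_ /andP[h1 h2]] := hbox w Pw.
    apply/andP; split; lra.
  have H := sum_absdx U sg0 V O B.
  rewrite -map_rot zip_map2 big_map /= in H.
  by rewrite (eq_bigr _ (fun e _ => hn _ _)) in H.
rewrite /cycle_length.
apply: (le_trans (ler_sum _ (fun e _ => dist_le_abs e.1 e.2))).
rewrite big_split /=.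
under eq_bigr do rewrite distrC.
under [X in _ + X <= _]eq_bigr do rewrite distrC.
lra.
Qed.

Lemma hull_perimeter_le P (X Y sg : R) : 0 <= sg ->
  (forall w, w \in P -> X <= w.1 <= X + sg /\ Y <= w.2 <= Y + sg) ->
  hull_perimeter P <= 4 * sg.
Proof.
move=> sg0 hbox; rewrite /hull_perimeter.
set S := (X in sup X).
have [ne|e] := pselect (S !=set0)%classic.
  by apply: ge_sup ne _ => l [s [hc ->]]; exact: cycle_le hc hbox.
have -> : S = set0%classic.
  by apply/seteqP; split => // l Sl; exfalso; apply: e; exists l.
by rewrite sup0; lra.
Qed.

End Hull.

Section Floor.
Variable R : realType.

Lemma nat1_eq (N : nat) : (0 < N)%N -> ((N - 1)%N%:R + 1 : R) = N%:R.
Proof. by move=> N0; rewrite -mulrSr subn1 prednK. Qed.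

Lemma floor_cell (t : R) (N : nat) : (0 < N)%N -> 0 <= t -> t <= N%:R ->
  let i := Order.min (Num.floor t) (N - 1)%:Z in
  [/\ 0 <= i, i <= (N - 1)%:Z, i%:~R <= t & t <= i%:~R + 1].
Proof.
move=> N0 t0 tN /=.
have hf1 := floor_le t; have hf2 := floorD1_gt t.
have f0 : 0 <= Num.floor t by rewrite floor_ge0.
rewrite intrD in hf2.
case: (leP (Num.floor t) (N - 1)%:Z) => h.
  by split => //; apply: ltW.
split => //.
  apply: le_trans hf1; rewrite ler_int; exact: ltW.
by rewrite [_%:~R]/= nat1_eq.
Qed.

Lemma ceil_cell (t : R) (N : nat) : (0 < N)%N -> 0 <= t -> t <= N%:R ->
  let j := Order.max (Num.ceil t - 1) 0 in
  [/\ 0 <= j, j <= (N - 1)%:Z, j%:~R <= t & t <= j%:~R + 1].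
Proof.
move=> N0 t0 tN /=.
have hc1 := ceil_ge t; have hc2 := ceilB1_lt t.
have cN : Num.ceil t <= N%:Z by rewrite ceil_le_int.
case: (leP 0 (Num.ceil t - 1)) => h.
  split => //.
  - lia.
  - exact: ltW.
  - by rewrite intrB in hc2 hc1 *; lra.
have c0 : Num.ceil t <= 0 by lia.
move: c0; rewrite ceil_le0 => c0.
split => //; rewrite /=; lra.
Qed.
End Floor.

Section Cells.
Variables (R : realType) (n : nat) (p : 'I_n -> R * R) (x0 y0 L : R).
Hypothesis hL : 0 < L.
Hypothesis hbs : bounding_square p x0 y0 L.

Definition sd k : R := L / 2 ^+ k.
Definition xl k (i : int) : R := x0 + i%:~R * sd k.
Definition yl k (j : int) : R := y0 + j%:~R * sd k.
Definition incl k (i j : int) (z : R * R) : bool :=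
  (xl k i <= z.1 <= xl k i + sd k) && (yl k j <= z.2 <= yl k j + sd k).

Lemma sd_gt0 k : 0 < sd k.
Proof. by rewrite /sd divr_gt0 // exprn_gt0. Qed.

Lemma sdS k : sd k.+1 = sd k / 2.
Proof. by rewrite /sd exprS invfM; field. Qed.

Lemma t_x (x c : R) (i : int) k : i%:~R <= (x - c) / L * 2 ^+ k <= i%:~R + 1 ->
  c + i%:~R * sd k <= x <= c + i%:~R * sd k + sd k.
Proof.
have e : (x - c) / L * 2 ^+ k * sd k = x - c.
  by rewrite /sd; field; rewrite expf_neq0 // lt0r_neq0.
have s0 := sd_gt0 k.
move=> /andP[h1 h2].
rewrite -(ler_pM2r s0) e in h1; rewrite -(ler_pM2r s0) e mulrDl mul1r in h2.
apply/andP; split; lra.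
Qed.

Lemma tx_range (x c : R) k : c <= x <= c + L ->
  0 <= (x - c) / L * 2 ^+ k /\ (x - c) / L * 2 ^+ k <= (2 ^ k)%N%:R.
Proof.
move=> /andP[h1 h2]; have k0 : 0 < (2 ^+ k : R) by rewrite exprn_gt0.
have u0 : 0 <= (x - c) / L by rewrite divr_ge0 //; lra.
have u1 : (x - c) / L <= 1 by rewrite ler_pdivrMr // mul1r; lra.
rewrite natrX; split; first by rewrite mulr_ge0 // ltW.
by rewrite -[leRHS]mul1r ler_pM2r.
Qed.

Lemma cell_incl k i j a : a \in cell_pts p x0 y0 L k i j ->
  incl k i j (p a) /\ [/\ 0 <= i, i <= (2 ^ k - 1)%N%:Z, 0 <= j & j <= (2 ^ k - 1)%N%:Z].
Proof.
rewrite inE => /andP[/eqP hx /eqP hy].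
have [bx b_y] := hbs a.
have [tx0 txN] := tx_range k bx; have [ty0 tyN] := tx_range k b_y.
have k0 : (0 < 2 ^ k)%N by rewrite expn_gt0.
have := floor_cell k0 tx0 txN; have := ceil_cell k0 ty0 tyN.
rewrite /= -/(cellx x0 L k (p a).1) -/(celly y0 L k (p a).2) hx hy.
move=> [j0 j1 j2 j3] [i0 i1 i2 i3].
split; last by [].
by rewrite /incl /xl /yl !t_x //; apply/andP.
Qed.

Lemma quad_incl k i j q a : a \in quad_pts p x0 y0 L k i j q ->
  incl k i j (p a) /\ [/\ 0 <= i, i <= (2 ^ k - 1)%N%:Z, 0 <= j & j <= (2 ^ k - 1)%N%:Z].
Proof.
rewrite /quad_pts => /cell_incl [].
rewrite /incl /xl /yl sdS expnS.
have k0 : (0 < 2 ^ k)%N by rewrite expn_gt0.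
have s0 := sd_gt0 k.
case: q => [[] []] /= /andP[/andP[h1 h2] /andP[h3 h4]] [i0 i1 j0 j1];
  (split; [ | split; lia]); rewrite !intrD !intrM /= in h1 h2 h3 h4;
  apply/andP; split; apply/andP; split; nra.
Qed.

Definition valid k (i j : nat) : bool :=
  [&& (i < 2 ^ k)%N, (j < 2 ^ k)%N &
   [exists a, exists b, [&& a != b, incl k i j (p a) & incl k i j (p b)]]].


Lemma root_valid : (1 < n)%N -> valid 0 0 0.
Proof.
move=> n1; rewrite /valid /=.
have n0 : (0 < n)%N by apply: ltnW.
have hin : forall a, incl 0 0 0 (p a).
  move=> a; have [/andP[h1 h2] /andP[h3 h4]] := hbs a.
  by rewrite /incl /xl /yl /sd expr0 divr1 mulr0z mul0r !addr0 h1 h2 h3 h4.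
apply/existsP; exists (Ordinal n0); apply/existsP; exists (Ordinal n1).
by rewrite !hin.
Qed.

Lemma nquad_valid k i j : (1 < nquad p x0 y0 L k i j)%N ->
  exists i' j' : nat, [/\ i = i'%:Z, j = j'%:Z & valid k i' j'].
Proof.
rewrite /nquad => /card_gt1P [q1 [q2 [h1 h2 q12]]].
rewrite !inE in h1 h2.
case/card_gt0P: h1 => a ha; case/card_gt0P: h2 => b hb.
have [ia [i0 i1 j0 j1]] := quad_incl ha; have [ib _] := quad_incl hb.
have k0 : (0 < 2 ^ k)%N by rewrite expn_gt0.
exists `|i|%N, `|j|%N; rewrite !gez0_abs //; split => //.
rewrite /valid; apply/and3P; split.
- by rewrite -ltz_nat gez0_abs //; lia.
- by rewrite -ltz_nat gez0_abs //; lia.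
apply/existsP; exists a; apply/existsP; exists b.
rewrite !gez0_abs // ia ib andbT andbT.
apply/eqP => eab; subst b.
move: ha hb q12; rewrite /quad_pts !inE.
case/andP=> /eqP ha1 /eqP ha2; case/andP=> /eqP hb1 /eqP hb2.
rewrite ha1 in hb1; rewrite ha2 in hb2.
by case: q1 q2 hb1 hb2 {ha1 ha2} => [[] []] [[] []] /= e1 e2; rewrite ?eqxx //; lia.
Qed.

Lemma compressed_valid k i j : (1 < n)%N -> compressed_square p x0 y0 L k i j ->
  exists i' j' : nat, [/\ i = i'%:Z, j = j'%:Z & valid k i' j'].
Proof.
move=> n1; case => [[-> [-> ->]] | h]; last exact: nquad_valid.
by exists 0%N, 0%N; split => //; exact: root_valid.
Qed.

Lemma cluster_witness d A : (1 < n)%N -> is_cluster p x0 y0 L d A ->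
  exists k (i j : nat), valid k i j /\
   (A = cell_pts p x0 y0 L k i j \/
    exists q1 q2, A = quad_pts p x0 y0 L k i j q1 :|: quad_pts p x0 y0 L k i j q2).
Proof.
move=> n1; case => [[k [i [j [hc ->]]]] | [k [i [j [hc [h3 [q1 [q2 [_ _ _ ->]]]]]]]]].
  have [i' [j' [-> -> v]]] := compressed_valid n1 hc.
  by exists k, i', j'; split => //; left.
have [i' [j' [-> -> v]]] := compressed_valid n1 hc.
by exists k, i', j'; split => //; right; exists q1, q2.
Qed.

End Cells.

Section Integral.
Variable R : realType.
Local Open Scope classical_set_scope.
Local Notation mu := (@lebesgue_measure R \x @lebesgue_measure R)%E.

Definition rect (a b s : R) : set (R * R) := `[a, a + s]%classic `*` `[b, b + s]%classic.

Lemma mitv (a b : R) : measurable (`[a, b]%classic : set R).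
Proof. exact: measurable_itv. Qed.

Lemma mrect a b s : measurable (rect a b s).
Proof. by apply: measurableX; exact: mitv. Qed.

Lemma leb_itv (a b : R) : a <= b -> lebesgue_measure (`[a, b]%classic : set R) = (b - a)%:E.
Proof. by move=> ab; rewrite lebesgue_measure_itv /= lte_fin; case: ltgtP ab => // [<-]; rewrite subrr. Qed.

Lemma mu_rect a b s : 0 <= s -> mu (rect a b s) = (s * s)%:E.
Proof.
move=> s0; rewrite /rect product_measure1E; [|exact: mitv|exact: mitv].
have ha : a <= a + s by lra.
have hb : b <= b + s by lra.
transitivity ((a + s - a)%:E * (b + s - b)%:E)%E.
  by congr (_ * _)%E; [exact: leb_itv | exact: leb_itv].
by rewrite -EFinM; congr (_%:E); ring.
Qed.

Lemma le_integral_gen (D : set (R * R)) (f g : R * R -> \bar R) :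
  (forall x, D x -> (0 <= g x)%E) -> (forall x, D x -> (g x <= f x)%E) ->
  (\int[mu]_(x in D) g x <= \int[mu]_(x in D) f x)%E.
Proof.
move=> g0 gf.
have f0 : forall x, D x -> (0 <= f x)%E by move=> x Dx; exact: le_trans (g0 x Dx) (gf x Dx).
rewrite ge0_integralE // [leRHS]ge0_integralE //.
apply: ge_ereal_sup => _ [h hg <-]; apply: ereal_sup_ubound; exists h => //= x.
apply: le_trans (hg x) _; rewrite /patch; case: ifP => // /set_mem Dx.
exact: gf.
Qed.

Lemma integral_rects (I : finType) (P : pred I) (a b s c : I -> R) (D : set (R * R)) :
  measurable D -> (forall i, 0 < s i) -> (forall i, 0 <= c i) ->
  (forall i, P i -> rect (a i) (b i) (s i) `<=` D) ->
  (\int[mu]_(z in D) ((\sum_(i | P i) c i * \1_(rect (a i) (b i) (s i)) z)%:E)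
  = (\sum_(i | P i) c i * (s i * s i))%:E)%E.
Proof.
move=> mD hs hc hsub.
under eq_integral do rewrite -sumEFin -big_filter.
rewrite ge0_integral_sum //; first last.
- by move=> i z _; rewrite lee_fin mulr_ge0 // ?indicE.
- move=> i; apply/measurable_realfun.measurable_EFinP; apply: measurable_realfun.measurable_funM.
    exact: measurable_cst.
  exact: measurable_realfun.measurable_indic (mrect _ _ _).
rewrite big_filter -sumEFin; apply: eq_bigr => i Pi.
have s0 := hs i; have sub := hsub i Pi.
have H := @integralZl_indic _ _ _ mu _ mD (fun=> rect (a i) (b i) (s i)) (c i).
rewrite /= in H; rewrite H //; last exact: mrect.
  2: by move=> hneg; exfalso; move: hneg; rewrite ltNge hc.
rewrite integral_indic //; last exact: mrect.
rewrite setIidl //.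
transitivity ((c i)%:E * (s i * s i)%:E)%E.
  by congr (_ * _)%E; apply: mu_rect; exact: ltW.
by rewrite -EFinM.
Qed.
End Integral.

Section Count.
Variable R : realType.

Lemma sum_ord_eq1 (M : nat) (u : int) :
  \sum_(i < M) (((nat_of_ord i)%:Z == u)%R%:R : R) <= 1.
Proof.
case: (pickP (fun i : 'I_M => (nat_of_ord i)%:Z == u)) => [i0 h0 | none].
  rewrite (bigD1 i0) //= h0 big1 ?addr0 // => i ne.
  apply/eqP; rewrite pnatr_eq0 eqb0; apply: contra ne => /eqP e.
  apply/eqP/val_inj => /=; move/eqP: h0 => h0; lia.
by rewrite big1 // => i _; rewrite none.
Qed.

Lemma count_strip (M : nat) (c s t : R) : 0 < s ->
  \sum_(i < M) ((c + (nat_of_ord i)%:Z%:~R * s <= t <= c + (nat_of_ord i)%:Z%:~R * s + s)%R%:R : R) <= 2.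
Proof.
move=> s0; set f := Num.floor ((t - c) / s).
apply: le_trans (_ : \sum_(i < M) ((((nat_of_ord i)%:Z == f - 1)%R%:R : R)
                   + (((nat_of_ord i)%:Z == f)%R%:R)) <= 2).
  apply: ler_sum => i _.
  case: (boolP (c + (nat_of_ord i)%:Z%:~R * s <= t <= c + (nat_of_ord i)%:Z%:~R * s + s)) => [/andP[h1 h2]|_] /=; last by rewrite addr_ge0.
  have e1 : (nat_of_ord i)%:Z%:~R <= (t - c) / s :> R by rewrite ler_pdivlMr //; lra.
  have e2 : (t - c) / s <= (nat_of_ord i)%:Z%:~R + 1 :> R.
    by rewrite ler_pdivrMr // mulrDl mul1r; lra.
  have f1 : (nat_of_ord i)%:Z <= f by rewrite floor_ge_int.
  have f2 : f <= (nat_of_ord i)%:Z + 1.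
    have := floor_le ((t - c) / s) => h.
    have : f%:~R <= ((nat_of_ord i)%:Z + 1)%:~R :> R by rewrite intrD; lra.
    by rewrite ler_int.
  have [e|e] : (nat_of_ord i)%:Z = f - 1 \/ (nat_of_ord i)%:Z = f by lia.
    by rewrite e eqxx /=; case: (_ == _) => /=; lra.
  by rewrite e eqxx /=; case: (_ == _) => /=; lra.
rewrite big_split /=.
have := sum_ord_eq1 M (f - 1); have := sum_ord_eq1 M f; lra.
Qed.

Lemma geom (K : nat) (B : R) : 0 <= B ->
  \sum_(k < K) (if 2 ^+ k <= B then 2 ^+ k else 0) <= 2 * B.
Proof.
move=> B0.
have H : forall K, ((\sum_(k < K) (if 2 ^+ k <= B then 2 ^+ k else 0 : R)) <= 2 ^+ K)%R /\
       ((\sum_(k < K) (if 2 ^+ k <= B then 2 ^+ k else 0 : R)) <= 2 * B)%R.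
  elim => [|K' [IH1 IH2]]; first by rewrite big_ord0 expr0; split; lra.
  rewrite big_ord_recr /= exprS.
  by case: ifP => h; split; lra.
exact: (H K).2.
Qed.
End Count.

Section Pointwise.
Variables (R : realType) (n : nat) (p : 'I_n -> R * R) (x0 y0 L : R).
Hypothesis hL : 0 < L.
Variable K : nat.

Definition QT := (('I_K * 'I_(2 ^ K)) * 'I_(2 ^ K))%type.
Definition vQ (q : QT) := valid p x0 y0 L q.1.1 q.1.2 q.2.
Definition sQ (q : QT) := sd L q.1.1.
Definition aQ (q : QT) := xl x0 L q.1.1 q.1.2.
Definition bQ (q : QT) := yl y0 L q.1.1 q.2.

Lemma in_rect_iff a b s (z : R * R) :
  (z \in rect a b s) = (a <= z.1 <= a + s) && (b <= z.2 <= b + s).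
Proof.
apply/idP/idP.
  by move/set_mem => [] /=; rewrite !in_itv /= => -> ->.
by move=> /andP[h1 h2]; apply/mem_set; split => /=; rewrite in_itv /=.
Qed.

Lemma valid_pow k (i j : nat) z : 0 < lfs p z ->
  valid p x0 y0 L k i j -> incl x0 y0 L k i j z ->
  2 ^+ k <= 2 * L / lfs p z.
Proof.
move=> l0 /and3P[_ _ /existsP [a /existsP [b /and3P [ab ia ib]]]] iz.
have hd : forall w, incl x0 y0 L k i j w -> dist z w <= 2 * sd L k.
  move=> w iw; apply: le_trans (dist_le_abs z w) _.
  move: iz iw; rewrite /incl => /andP[/andP[z1 z2] /andP[z3 z4]] /andP[/andP[w1 w2] /andP[w3 w4]].
  have h1 : `|z.1 - w.1| <= sd L k by rewrite ler_norml; apply/andP; split; lra.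
  have h2 : `|z.2 - w.2| <= sd L k by rewrite ler_norml; apply/andP; split; lra.
  lra.
have hl := lfs_le ab (hd _ ia) (hd _ ib).
have k0 : 0 < (2 ^+ k : R) by rewrite exprn_gt0.
have e : 2 ^+ k * (2 * sd L k) = 2 * L by rewrite /sd; field; rewrite expf_neq0.
rewrite ler_pdivlMr //.
apply: (@le_trans _ _ (2 ^+ k * (2 * sd L k))); last by rewrite e.
by rewrite ler_pM2l.
Qed.

Lemma pointwise (z : R * R) : 0 < lfs p z ->
  \sum_(q : QT | vQ q) (16 * sQ q)^-1 * \1_(rect (aQ q) (bQ q) (sQ q)) z <= (lfs p z)^-1.
Proof.
move=> l0; set l := lfs p z; set B := 2 * L / l.
pose g (k : nat) : R := (if 2 ^+ k <= B then 2 ^+ k else 0) / L.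
pose sx (k i : nat) : R := (x0 + (i%:Z)%:~R * sd L k <= z.1 <= x0 + (i%:Z)%:~R * sd L k + sd L k)%R%:R.
pose sy (k j : nat) : R := (y0 + (j%:Z)%:~R * sd L k <= z.2 <= y0 + (j%:Z)%:~R * sd L k + sd L k)%R%:R.
have g0 : forall k, 0 <= g k by move=> k; rewrite /g; case: ifP => _; rewrite ?mul0r // divr_ge0 // ?exprn_ge0 // ltW.
have sx0 : forall k i, 0 <= sx k i by move=> k i; rewrite /sx ler0n.
have sy0 : forall k i, 0 <= sy k i by move=> k i; rewrite /sy ler0n.
have step1 : forall q : QT, (if vQ q then (16 * sQ q)^-1 * \1_(rect (aQ q) (bQ q) (sQ q)) z else 0)
    <= 16^-1 * (g q.1.1 * (sx q.1.1 q.1.2 * sy q.1.1 q.2)).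
  move=> [[k i] j] /=.
  have rhs0 : 0 <= 16^-1 * (g k * (sx k i * sy k j)).
    by apply: mulr_ge0; [rewrite invr_ge0 | apply: mulr_ge0 => //; apply: mulr_ge0].
  case: ifP => hv; last exact: rhs0.
  rewrite indicE in_rect_iff.
  case: (boolP (_ && _)) => [hin|_]; last by rewrite mulr0.
  have hin' : incl x0 y0 L k i j z by exact: hin.
  have hp := valid_pow l0 hv hin'.
  move: hin; rewrite /aQ /bQ /sQ /xl /yl /= => /andP[hx hy].
  rewrite /sx /sy hx hy /g -/B hp /= mulr1 mul1r.
  have k0 : (2 ^+ k : R) != 0 by rewrite expf_neq0.
  by rewrite /sd le_eqVlt; apply/orP; left; apply/eqP; field; rewrite k0 lt0r_neq0.
have hk : forall k : 'I_K, \sum_(i < 2 ^ K) \sum_(j < 2 ^ K) g k * (sx k i * sy k j) <= g k * 4.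
  move=> k.
  have ex : \sum_(i < 2 ^ K) \sum_(j < 2 ^ K) g k * (sx k i * sy k j)
      = g k * ((\sum_(i < 2 ^ K) sx k i) * (\sum_(j < 2 ^ K) sy k j)).
    rewrite mulr_suml mulr_sumr; apply: eq_bigr => i _.
    rewrite mulr_sumr mulr_sumr; apply: eq_bigr => j _; ring.
  rewrite ex; apply: ler_wpM2l; first exact: g0.
  have h1 := count_strip (2 ^ K) x0 z.1 (sd_gt0 hL k).
  have h2 := count_strip (2 ^ K) y0 z.2 (sd_gt0 hL k).
  have s1 : 0 <= \sum_(i < 2 ^ K) sx k i by apply: sumr_ge0.
  have s2 : 0 <= \sum_(j < 2 ^ K) sy k j by apply: sumr_ge0.
  apply: (@le_trans _ _ (2 * 2)); last lra.
  by apply: ler_pM.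
rewrite big_mkcond /=; apply: le_trans (ler_sum _ (fun q _ => step1 q)) _.
rewrite -mulr_sumr.
have e : \sum_(q : QT) (g q.1.1 * (sx q.1.1 q.1.2 * sy q.1.1 q.2))
    = \sum_(k < K) \sum_(i < 2 ^ K) \sum_(j < 2 ^ K) g k * (sx k i * sy k j).
  by rewrite pair_bigA pair_bigA.
rewrite e.
apply: (@le_trans _ _ (16^-1 * \sum_(k < K) g k * 4)).
  rewrite ler_pM2l ?invr_gt0 //; apply: ler_sum => k _; exact: hk k.
rewrite -mulr_suml /g -mulr_suml.
have B0 : 0 <= B by rewrite /B divr_ge0 // ?mulr_ge0 // ltW.
have hg := geom K B0.
set S := \sum_(k < K) _ in hg *.
have hS : S / L <= 2 * B / L by rewrite ler_pM2r // invr_gt0.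
have eB : 2 * B / L = 4 / l by rewrite /B; field; rewrite lt0r_neq0 // lt0r_neq0.
rewrite eB in hS.
set X := S / L in hS *.
have : 4 / l = 4 * l^-1 by [].
lra.
Qed.
End Pointwise.

Lemma sum_cover (R : realType) (I J : finType) (P : pred I) (V : pred J) (phi : J -> I) (g : I -> R) :
  (forall i, 0 <= g i) -> (forall i, P i -> exists j, V j /\ phi j = i) ->
  \sum_(i | P i) g i <= \sum_(j | V j) g (phi j).
Proof.
move=> g0 cov.
rewrite [leRHS](partition_big phi xpredT) //= big_mkcond /=.
apply: ler_sum => i _; case: ifP => Pi; last by apply: sumr_ge0 => j _.
have [j0 [Vj0 pj0]] := cov i Pi.
rewrite (bigD1 j0) /=; last by rewrite Vj0 pj0 eqxx.
rewrite pj0 lerDl; apply: sumr_ge0 => j _; exact: g0.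
Qed.

Lemma fin_bound (T : finType) (Pr : T -> nat -> Prop) :
  (forall x, exists K, forall K', (K <= K')%N -> Pr x K') -> exists K, forall x, Pr x K.
Proof.
move=> H.
have : forall s : seq T, exists K, forall x, x \in s -> forall K', (K <= K')%N -> Pr x K'.
  elim => [|x s [K IH]]; first by exists 0%N.
  have [K1 h1] := H x.
  exists (maxn K K1) => y; rewrite in_cons => /orP[/eqP ->|ys] K' hK'.
    by apply: h1; apply: leq_trans hK'; exact: leq_maxr.
  by apply: IH => //; apply: leq_trans hK'; exact: leq_maxl.
move=> /(_ (enum T)) [K HK]; exists K => x; apply: HK => //.
by rewrite mem_enum.
Qed.

Lemma hp_ge0 (R : realType) (P : seq (R * R)) (X Y sg : R) : 0 <= sg ->
  (forall w, w \in P -> X <= w.1 <= X + sg /\ Y <= w.2 <= Y + sg) ->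
  0 <= hull_perimeter P.
Proof.
move=> sg0 hbox; rewrite /hull_perimeter.
set S := (X in sup X).
have [[l Sl]|e] := pselect (S !=set0)%classic; last first.
  have -> : S = set0%classic.
    by apply/seteqP; split => // l Sl; exfalso; apply: e; exists l.
  by rewrite sup0.
have hs : has_sup S.
  split; first by exists l.
  exists (4 * sg) => m [s [hc ->]]; exact: cycle_le hc hbox.
apply: le_trans (sup_upper_bound hs Sl).
case: Sl => s [_ ->]; rewrite /cycle_length; apply: sumr_ge0 => e _; exact: dist_ge0.
Qed.

Unset Implicit Arguments.

Theorem lemma9 (R : realType) :
  exists c : R, forall (n : nat) (p : 'I_n -> R * R),
    (2 <= n)%N -> injective p ->
    forall x0 y0 L : R, min_bounding_square p x0 y0 L ->
    forall d : nat -> int -> int -> bool,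
    ((\sum_(A : {set 'I_n} | `[< is_cluster p x0 y0 L d A >])
        hull_perimeter [seq p a | a in A])%:E
     <= c%:E * \int[(@lebesgue_measure R \x @lebesgue_measure R)%E]_(z in closed_square x0 y0 L)
               ((lfs p z)^-1)%:E)%E.
Proof.
exists 1088; move=> n p n2 inj x0 y0 L [hbs _] d.
have n1 : (1 < n)%N := n2.
have hL : 0 < L.
  have a0 : (0 < n)%N by apply: ltnW.
  have [/andP[a1 a2] /andP[a3 a4]] := hbs (Ordinal a0).
  have [/andP[b1 b2] /andP[b3 b4]] := hbs (Ordinal n1).
  rewrite ltNge; apply/negP => L0.
  have : p (Ordinal a0) = p (Ordinal n1) by apply: pair_eq2; lra.
  by move/inj/(congr1 val).
have [K HK] : exists K, forall A, is_cluster p x0 y0 L d A ->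
    exists k i j : nat, [/\ (k < K)%N, valid p x0 y0 L k i j &
     (A = cell_pts p x0 y0 L k i j \/
      exists q1 q2, A = quad_pts p x0 y0 L k i j q1 :|: quad_pts p x0 y0 L k i j q2)].
  apply: (fin_bound (Pr := fun A K => is_cluster p x0 y0 L d A ->
    exists k i j : nat, [/\ (k < K)%N, valid p x0 y0 L k i j &
     (A = cell_pts p x0 y0 L k i j \/
      exists q1 q2, A = quad_pts p x0 y0 L k i j q1 :|: quad_pts p x0 y0 L k i j q2)])).
  move=> A; case: (pselect (is_cluster p x0 y0 L d A)) => hc; last first.
    by exists 0%N => K' _ /hc.
  have [k [i [j [v h]]]] := cluster_witness hL hbs n1 hc.
  exists k.+1 => K' hK' _; exists k, i, j; split => //.
pose O := option ((bool * bool) * (bool * bool)).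
pose phi (jj : (QT K * O)%type) : {set 'I_n} :=
  match jj.2 with
  | None => cell_pts p x0 y0 L jj.1.1.1 jj.1.1.2 jj.1.2
  | Some qq => quad_pts p x0 y0 L jj.1.1.1 jj.1.1.2 jj.1.2 qq.1
               :|: quad_pts p x0 y0 L jj.1.1.1 jj.1.1.2 jj.1.2 qq.2
  end.
have hp0 : forall A : {set 'I_n}, 0 <= hull_perimeter [seq p a | a in A].
  move=> A; apply: (hp_ge0 (X := x0) (Y := y0) (ltW hL)).
  move=> w /mapP [a _ ->]; exact: hbs a.
have H1 : \sum_(A : {set 'I_n} | `[< is_cluster p x0 y0 L d A >])
    hull_perimeter [seq p a | a in A]
    <= \sum_(jj : (QT K * O)%type | vQ p x0 y0 L jj.1) hull_perimeter [seq p a | a in phi jj].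
  apply: (sum_cover (phi := phi) (g := fun A => hull_perimeter [seq p a | a in A])) => //.
  move=> A /asboolP hc.
  have [k [i [j [kK v hA]]]] := HK A hc.
  have v' := v; case/and3P: v' => ik jk _.
  have kK' : (2 ^ k <= 2 ^ K)%N by rewrite leq_pexp2l // ltnW.
  pose q : QT K := (Ordinal kK, Ordinal (leq_trans ik kK'), Ordinal (leq_trans jk kK')).
  case: hA => [hA|[q1 [q2 hA]]].
    by exists (q, None); split => //; rewrite hA.
  by exists (q, Some (q1, q2)); split => //; rewrite hA.
have H2 : \sum_(jj : (QT K * O)%type | vQ p x0 y0 L jj.1) hull_perimeter [seq p a | a in phi jj]
    <= \sum_(jj : (QT K * O)%type | vQ p x0 y0 L jj.1) 4 * sQ L jj.1.
  apply: ler_sum => jj _; case: jj => [[[k i] j] o] /=.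
  apply: (hull_perimeter_le (X := xl x0 L k i) (Y := yl y0 L k j)).
    exact: ltW (sd_gt0 hL k).
  move=> w /mapP [a ha ->]; rewrite mem_enum in ha.
  have : incl x0 y0 L k i j (p a).
    rewrite /phi /= in ha; case: o ha => [[q1 q2]|] /= ha.
      by rewrite inE in ha; case/orP: ha => ha; exact: (quad_incl hL hbs ha).1.
    exact: (cell_incl hL hbs ha).1.
  by rewrite /incl => /andP[h1 h2].
set S := \sum_(q : QT K | vQ p x0 y0 L q) sQ L q.
have H3 : \sum_(jj : (QT K * O)%type | vQ p x0 y0 L jj.1) 4 * sQ L jj.1 = 68 * S.
  transitivity (\sum_(q : QT K | vQ p x0 y0 L q) \sum_(o : O) 4 * sQ L q).
    by rewrite pair_big /=; apply: eq_bigl => jj; rewrite andbT.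
  rewrite /S mulr_sumr; apply: eq_bigr => q _.
  rewrite sumr_const card_option !card_prod !card_bool -mulr_natr; ring.
have eD : closed_square x0 y0 L = rect x0 y0 L.
  apply/seteqP; split => z hz.
    by apply/set_mem; rewrite in_rect_iff; case: hz => -> ->.
  by move/mem_set: hz; rewrite in_rect_iff => /andP[h1 h2]; split.
have mD : measurable (closed_square x0 y0 L) by rewrite eD; exact: mrect.
have sub : forall q : QT K, vQ p x0 y0 L q ->
    (rect (aQ x0 L q) (bQ y0 L q) (sQ L q) `<=` closed_square x0 y0 L)%classic.
  move=> [[k i] j] /= v z /mem_set.
  rewrite in_rect_iff /aQ /bQ /sQ /xl /yl /= => /andP[/andP[h1 h2] /andP[h3 h4]].
  case/and3P: v => ik jk _.
  have s0 := sd_gt0 hL k.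
  have e : 2 ^+ k * sd L k = L by rewrite /sd; field; rewrite expf_neq0.
  have hi : ((nat_of_ord i)%:R + 1 : R) <= 2 ^+ k by rewrite natr1 -natrX ler_nat.
  have hj : ((nat_of_ord j)%:R + 1 : R) <= 2 ^+ k by rewrite natr1 -natrX ler_nat.
  have hi0 : 0 <= ((nat_of_ord i)%:R : R) by apply: ler0n.
  have hj0 : 0 <= ((nat_of_ord j)%:R : R) by apply: ler0n.
  have ci : ((Posz (nat_of_ord i))%:~R : R) = (nat_of_ord i)%:R by [].
  have cj : ((Posz (nat_of_ord j))%:~R : R) = (nat_of_ord j)%:R by [].
  rewrite ci in h1 h2; rewrite cj in h3 h4.
  split; apply/andP; split; nra.
have c0 : forall q : QT K, 0 <= (16 * sQ L q)^-1.
  by move=> q; rewrite invr_ge0 mulr_ge0 // ltW // sd_gt0.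
have g0 : forall z, closed_square x0 y0 L z ->
    (0 <= ((\sum_(q : QT K | vQ p x0 y0 L q) (16 * sQ L q)^-1 *
             \1_(rect (aQ x0 L q) (bQ y0 L q) (sQ L q)) z)%:E))%E.
  move=> z _; rewrite lee_fin; apply: sumr_ge0 => q _; apply: mulr_ge0 => //.
have pw : forall z, closed_square x0 y0 L z ->
    (((\sum_(q : QT K | vQ p x0 y0 L q) (16 * sQ L q)^-1 *
             \1_(rect (aQ x0 L q) (bQ y0 L q) (sQ L q)) z)%:E) <= ((lfs p z)^-1)%:E)%E.
  by move=> z _; rewrite lee_fin; exact: (pointwise x0 y0 hL K (lfs_gt0 z inj n1)).
have HI := le_integral_gen g0 pw.
have HR := (integral_rects (a := @aQ R x0 L K) (b := @bQ R y0 L K) (s := @sQ R L K)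
   (c := fun q => (16 * sQ L q)^-1) mD (fun q => sd_gt0 hL _) c0 sub).
rewrite /= in HR; rewrite HR in HI.
have eS : \sum_(q : QT K | vQ p x0 y0 L q) (16 * sQ L q)^-1 * (sQ L q * sQ L q) = S / 16.
  rewrite /S mulr_suml; apply: eq_bigr => q _; field.
  by rewrite lt0r_neq0 // sd_gt0.
rewrite eS in HI.
have hLHS := le_trans H1 H2; rewrite H3 in hLHS.
apply: (@le_trans _ _ ((68 * S)%:E)); first by rewrite lee_fin; exact: hLHS.
clearbody S.
have e68 : ((68 * S)%:E = 1088%:E * (S / 16)%:E)%E.
  rewrite -EFinM; congr (_%:E); field; by [].
Time rewrite e68.
have h1088 : (0 <= (1088 : R)%:E)%E.
  rewrite lee_fin; exact: ler0n.
Time exact: (lee_wpmul2l h1088 HI).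
Qed.
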